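(* Let $(C,\delta,P)$ be a chain complex with involution over $\mathbb{Z}_D$. Let $\mathcal{V}\le C$ be a subspace and $\mathcal{V}^>$ a direct complement of it, and let $W,W^>:C\to C$ be the projections onto $\mathcal{V}$ and $\mathcal{V}^>$ corresponding to the decomposition $C=\mathcal{V}\oplus\mathcal{V}^>$. Suppose $PW=WP$. Let $S^>=W\delta(\mathcal{V}^>)$, $\mathcal{V}'=\mathcal{V}/S^>$, and define $\varphi:C\to\mathcal{V}'$ by $\varphi(h)=Wh+S^>$. Then the maps $\delta',P':\mathcal{V}'\to\mathcal{V}'$ given by $\delta'(x+S^>)=\varphi(\delta(x))$ and $P'(x+S^>)=\varphi(P(x))$ (for $x\in\mathcal{V}$) are well defined, $(\mathcal{V}',\delta',P')$ is a chain complex with involution, and $\varphi$ is a chain map ($\delta'\varphi=\varphi\delta$) satisfying $\varphi P=P'\varphi$. Moreover, $\ker\delta'=\varphi(\delta^{-1}(\mathcal{V}^>))$ and $\operatorname{im}\delta'=\varphi(\operatorname{im}\delta)$.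
   Context: $D$ is an odd prime and $\mathbb{Z}_D$ the field with $D$ elements. A chain complex with involution over $\mathbb{Z}_D$ is a triple $(C,\partial,P)$ where $C$ is a $\mathbb{Z}_D$-vector space and $\partial,P:C\to C$ are linear maps with $\partial^2=0$, $P^2=I$ and $\partial P+P\partial=0$. $\delta^{-1}(\mathcal{V}^>)$ denotes the preimage $\{x\in C:\delta x\in\mathcal{V}^>\}$. *)

(* Defs.v *)
From HB Require Import structures.
From mathcomp Require Import all_boot all_order all_algebra.
Set Implicit Arguments. Unset Strict Implicit. Unset Printing Implicit Defensive.
Import GRing.Theory.
Local Open Scope ring_scope.

Definition is_subspace (K : nzRingType) (C : lmodType K) (U : {pred C}) : Prop :=
  (0 \in U) /\ (forall (a : K) (x y : C), x \in U -> y \in U -> a *: x + y \in U).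

Definition direct_complement (K : nzRingType) (C : lmodType K) (U1 U2 : {pred C}) : Prop :=
  is_subspace U1 /\ is_subspace U2 /\
  (forall x, x \in U1 -> x \in U2 -> x = 0) /\
  (forall c : C, exists u1 u2, u1 \in U1 /\ u2 \in U2 /\ c = u1 + u2).

Definition chain_complex_inv (K : nzRingType) (C : lmodType K) (d P : C -> C) : Prop :=
  linear d /\ linear P /\
  (forall x, d (d x) = 0) /\
  (forall x, P (P x) = x) /\
  (forall x, d (P x) + P (d x) = 0).

(* Main.v *)
Require Import Defs.
From HB Require Import structures.
From mathcomp Require Import all_boot all_order all_algebra.
Import GRing.Theory.
Local Open Scope ring_scope.

Lemma linB {K : pzRingType} {U V : lmodType K} {f : U -> V} :
  linear f -> forall x y, f (x - y) = f x - f y.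
Proof. by move=> h; apply: zmod_morphism_linear. Qed.

Lemma lin0 {K : pzRingType} {U V : lmodType K} {f : U -> V} :
  linear f -> f 0 = 0.
Proof. by move=> h; rewrite -[0 in LHS](subrr 0) (linB h) subrr. Qed.

Lemma linN {K : pzRingType} {U V : lmodType K} {f : U -> V} :
  linear f -> forall x, f (- x) = - f x.
Proof. by move=> h x; rewrite -sub0r (linB h) (lin0 h) sub0r. Qed.

Lemma linD {K : pzRingType} {U V : lmodType K} {f : U -> V} :
  linear f -> forall x y, f (x + y) = f x + f y.
Proof. move=> h x y; have -> : x + y = x - (- y) by rewrite opprK.
by rewrite (linB h) (linN h) opprK. Qed.

Lemma linZ {K : pzRingType} {U V : lmodType K} {f : U -> V} :
  linear f -> forall a x, f (a *: x) = a *: f x.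
Proof. by move=> h a x; rewrite -[a *: x]addr0 h (lin0 h) addr0. Qed.

Lemma mem0 {K : nzRingType} {C : lmodType K} {U : {pred C}} :
  is_subspace U -> 0 \in U.
Proof. by case. Qed.

Lemma memD {K : nzRingType} {C : lmodType K} {U : {pred C}} :
  is_subspace U -> forall x y, x \in U -> y \in U -> x + y \in U.
Proof. by case=> _ h x y hx hy; rewrite -[x]scale1r; apply: h. Qed.

Lemma memZ {K : nzRingType} {C : lmodType K} {U : {pred C}} :
  is_subspace U -> forall a x, x \in U -> a *: x \in U.
Proof. by case=> h0 h a x hx; rewrite -[_ *: _]addr0; apply: h. Qed.

Lemma memN {K : nzRingType} {C : lmodType K} {U : {pred C}} :
  is_subspace U -> forall x, x \in U -> - x \in U.
Proof. by move=> h x hx; rewrite -scaleN1r; exact: (memZ h). Qed.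

Lemma memB {K : nzRingType} {C : lmodType K} {U : {pred C}} :
  is_subspace U -> forall x y, x \in U -> y \in U -> x - y \in U.
Proof. by move=> h x y hx hy; apply: (memD h) => //; exact: (memN h). Qed.

Lemma zid (G : zmodType) (A v T B S : G) :
  A + v - T - (A - B + (v - S)) = B + S - T.
Proof. by rewrite addrACA -opprD opprB (addrC (A + v - T)) addrA subrK. Qed.

Theorem lemma2 (D : nat) (hD : prime D) (hodd : odd D)
  (C : lmodType 'F_D) (d P : C -> C) (hC : chain_complex_inv d P)
  (V Vc : {pred C}) (hV : direct_complement V Vc)
  (W Wc : C -> C)
  (hW : forall c, W c \in V) (hWc : forall c, Wc c \in Vc)
  (hWWc : forall c, c = W c + Wc c)
  (hPW : forall c, P (W c) = W (P c))
  (Q : lmodType 'F_D) (q : C -> Q) (hq : linear q)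
  (hq_surj : forall y : Q, exists x, x \in V /\ q x = y)
  (hq_ker : forall x, x \in V -> (q x = 0 <-> exists v, v \in Vc /\ x = W (d v))) :
  exists d' P' : Q -> Q,
    (forall x, x \in V -> d' (q x) = q (W (d x))) /\
    (forall x, x \in V -> P' (q x) = q (W (P x))) /\
    chain_complex_inv d' P' /\
    (forall h, d' (q (W h)) = q (W (d h))) /\
    (forall h, q (W (P h)) = P' (q (W h))) /\
    (forall y : Q, d' y = 0 <-> exists h, d h \in Vc /\ y = q (W h)) /\
    (forall y : Q, (exists z, y = d' z) <-> exists h, y = q (W (d h))).
Proof.
case: hC => [hd [hP [hdd [hPP hdP]]]].
case: hV => [sV [sVc [hcap _]]].
have eWc c : Wc c = c - W c by rewrite {2}(hWWc c) addrC addKr.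
have eW c : W c = c - Wc c by rewrite {2}(hWWc c) addrK.
have WV x : x \in V -> W x = x.
  move=> xV; have h0 : Wc x = 0.
    apply: hcap => //; rewrite eWc; exact: (memB sV).
  by rewrite eW h0 subr0.
have WVc x : x \in Vc -> W x = 0.
  move=> xV; apply: hcap => //; rewrite eW; apply: (memB sVc) => //.
have WW c : W (W c) = W c by apply: WV.
have hWl : linear W.
  move=> a u v /=.
  have e1 : W (a *: u + v) - (a *: W u + W v) \in V.
    by apply: (memB sV) => //; apply: (memD sV) => //; apply: (memZ sV).
  have e2 : W (a *: u + v) - (a *: W u + W v) \in Vc.
    rewrite !eW scalerBr.
    rewrite zid.
    apply: (memB sVc) => //; apply: (memD sVc) => //; apply: (memZ sVc); exact: hWc.
  by apply/eqP; rewrite -subr_eq0; apply/eqP; exact: (hcap _ e1 e2).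
have PVc v : v \in Vc -> P v \in Vc.
  move=> vV; have -> : P v = Wc (P v).
    by rewrite eWc -hPW (WVc v vV) (lin0 hP) subr0.
  exact: hWc.
have kerS v : v \in Vc -> q (W (d v)) = 0.
  by move=> vV; apply/(hq_ker _ (hW _)); exists v.
have wdd x y : x \in V -> y \in V -> q x = q y -> q (W (d x)) = q (W (d y)).
  move=> xV yV hxy; apply/eqP; rewrite -subr_eq0 -!(linB hq) -(linB hWl) -(linB hd).
  have [v [vV ev]] : exists v, v \in Vc /\ x - y = W (d v).
    by apply/(hq_ker _ (memB sV _ _ xV yV)); rewrite (linB hq) hxy subrr.
  rewrite ev (eW (d v)) (linB hd) hdd sub0r -(linN hd).
  by apply/eqP; apply: kerS; apply: (memN sVc); exact: hWc.
have wdP x y : x \in V -> y \in V -> q x = q y -> q (W (P x)) = q (W (P y)).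
  move=> xV yV hxy; apply/eqP; rewrite -subr_eq0 -!(linB hq) -(linB hWl) -(linB hP).
  have [v [vV ev]] : exists v, v \in Vc /\ x - y = W (d v).
    by apply/(hq_ker _ (memB sV _ _ xV yV)); rewrite (linB hq) hxy subrr.
  have edv : d v = - P (d (P v)).
    by apply/eqP; rewrite -addr_eq0 -{1}(hPP v) hdP.
  rewrite ev hPW WW edv (linN hP) hPP -(linN hd).
  by apply/eqP; apply: kerS; apply: (memN sVc); apply: PVc.
have [s hs] : exists s : Q -> C, forall y, s y \in V /\ q (s y) = y.
  have hs' y : exists x, (x \in V) && (q x == y).
    by have [x [xV qx]] := hq_surj y; exists x; rewrite xV qx eqxx.
  exists (fun y => xchoose (hs' y)) => y.
  by have /andP[-> /eqP ->] := xchooseP (hs' y).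
pose d' y := q (W (d (s y))).
pose P' y := q (W (P (s y))).
have d'q x : x \in V -> d' (q x) = q (W (d x)).
  by move=> xV; have [h1 h2] := hs (q x); apply: wdd.
have P'q x : x \in V -> P' (q x) = q (W (P x)).
  by move=> xV; have [h1 h2] := hs (q x); apply: wdP.
have d'W : forall h, d' (q (W h)) = q (W (d h)).
  move=> h.
  rewrite (d'q _ (hW _)) {2}(hWWc h) (linD hd) (linD hWl) (linD hq) (kerS _ (hWc h)).
  by rewrite addr0.
exists d', P'; split; first exact: d'q. split; first exact: P'q.
split; last (split; first exact: d'W; split; [|split]).
- split.
    move=> a y z; have [yV qy] := hs y; have [zV qz] := hs z.
    rewrite -{1}qy -{1}qz -(linZ hq) -(linD hq) d'q; last first.
      by apply: (memD sV) => //; apply: (memZ sV).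
    by rewrite hd hWl hq.
  split.
    move=> a y z; have [yV qy] := hs y; have [zV qz] := hs z.
    rewrite -{1}qy -{1}qz -(linZ hq) -(linD hq) P'q; last first.
      by apply: (memD sV) => //; apply: (memZ sV).
    by rewrite hP hWl hq.
  split.
    move=> y; have [yV qy] := hs y; rewrite -qy (d'q _ yV) (d'q _ (hW _)).
    rewrite (eW (d (s y))) (linB hd) hdd sub0r -(linN hd).
    by apply: kerS; apply: (memN sVc); exact: hWc.
  split.
    move=> y; have [yV qy] := hs y; rewrite -qy (P'q _ yV) (P'q _ (hW _)).
    by rewrite hPW WW hPP (WV _ yV).
  move=> y; have [yV qy] := hs y.
  rewrite -qy (P'q _ yV) (d'q _ yV) (d'q _ (hW _)) (P'q _ (hW _)).
  rewrite -[W (P (s y))]hPW (WV _ yV) hPW WW -(linD hq) -(linD hWl) hdP.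
  by rewrite (lin0 hWl) (lin0 hq).
- by move=> h; rewrite (P'q _ (hW _)) hPW WW.
- move=> y; split.
    have [xV qx] := hs y; rewrite -qx (d'q _ xV) => /(hq_ker _ (hW _)) [v [vV ev]].
    exists (s y - v); split.
      have e0 : W (d (s y - v)) = 0 by rewrite (linB hd) (linB hWl) ev subrr.
      by have := hWc (d (s y - v)); rewrite eWc e0 subr0.
    by rewrite (linB hWl) (WVc _ vV) subr0 WV.
  by case=> h [dh ->]; rewrite d'W (WVc _ dh) (lin0 hq).
- move=> y; split.
    by case=> z ->; have [zV qz] := hs z; exists (s z).
  by case=> h ->; exists (q (W h)); rewrite d'W.
Qed.
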